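(* Let $q=(q_1,q_2,q_3)\in K^3$. There exists a linear endomorphism $\varphi_q$ of $\mathbf{WQSym}$ such that $\varphi_q\circ L=\Gamma_q$ if, and only if, $q=(1,0,0)$ or $q=(0,1,0)$.
   Context: Let $K$ be a field; convention $0^0=1$. For $n\geq0$, $[n]=\{1,\ldots,n\}$, $\mathbb{T}_n$ is the set of topologies on $[n]$ and $\mathcal{H}_{\mathbb{T}}$ the $K$-vector space with basis $\bigsqcup_n\mathbb{T}_n$. For a topology $\mathcal{T}$ on $[n]$: $i\leq_{\mathcal{T}}j$ iff every open set containing $i$ contains $j$; $i\sim_{\mathcal{T}}j$ iff $i\leq_{\mathcal{T}}j$ and $j\leq_{\mathcal{T}}i$; $i<_{\mathcal{T}}j$ iff $i\leq_{\mathcal{T}}j$ and not $j\leq_{\mathcal{T}}i$. A packed word of length $n$ is a word $f=f(1)\ldots f(n)$ of positive integers with $\{f(1),\ldots,f(n)\}=[\max f]$; $\mathbf{WQSym}$ is the $K$-vector space with basis the packed words. A linear extension of $\mathcal{T}\in\mathbb{T}_n$ is a packed word $f$ of length $n$ with $f(i)=f(j)\Leftrightarrow i\sim_{\mathcal{T}}j$ and $i<_{\mathcal{T}}j\Rightarrow f(i)<f(j)$; $\mathcal{L}(\mathcal{T})$ is their set and $L$ is the linear map $\mathcal{H}_{\mathbb{T}}\to\mathbf{WQSym}$, $L(\mathcal{T})=\sum_{f\in\mathcal{L}(\mathcal{T})}f$. A generalized T-partition of $\mathcal{T}\in\mathbb{T}_n$ is a packed word $f$ of length $n$ with $i\leq_{\mathcal{T}}j\Rightarrow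 f(i)\leq f(j)$; $\mathcal{P}(\mathcal{T})$ is their set. For $f\in\mathcal{P}(\mathcal{T})$: $\ell_1(f)=\sharp\{(i,j)\mid i<_{\mathcal{T}}j,\ i<j,\ f(i)=f(j)\}$; $\ell_2(f)=\sharp\{(i,j)\mid i<_{\mathcal{T}}j,\ i>j,\ f(i)=f(j)\}$; $\ell_3(f)=\sharp\{(i,j,k)\mid i<j<k,\ i\sim_{\mathcal{T}}k,\ \text{not }i\sim_{\mathcal{T}}j,\ \text{not }j\sim_{\mathcal{T}}k,\ f(i)=f(j)=f(k)\}$. $\Gamma_q:\mathcal{H}_{\mathbb{T}}\to\mathbf{WQSym}$ is the linear map $\Gamma_q(\mathcal{T})=\sum_{f\in\mathcal{P}(\mathcal{T})}q_1^{\ell_1(f)}q_2^{\ell_2(f)}q_3^{\ell_3(f)}f$. *)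

(* Defs.v *)
From HB Require Import structures.
From mathcomp Require Import all_boot all_order all_algebra.
From mathcomp Require Import finmap.
From mathcomp.multinomials Require Import monalg.
Set Implicit Arguments. Unset Strict Implicit. Unset Printing Implicit Defensive.
Import GRing.Theory.
Local Open Scope ring_scope.

(* A word f = f(1)...f(n) of positive integers is a seq nat; f(i) = nth 0 f (i-1). *)
Definition packed (w : seq nat) : bool :=
  (0 \notin w) && all (fun k => k \in w) (iota 1 (\max_(x <- w) x)).

Definition pword := {w : seq nat | packed w}.

Lemma packed_nil : packed [::]. Proof. by rewrite /packed big_nil. Qed.
Definition pword_nil : pword := exist _ [::] packed_nil.

Definition WQSym (K : fieldType) := {malg K[pword]}.

Definition to_pword (w : seq nat) : pword := insubd pword_nil w.

Definition is_topology n (T : {set {set 'I_n}}) : bool :=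
  [&& set0 \in T, setT \in T,
      [forall U in T, forall V in T, (U :|: V) \in T] &
      [forall U in T, forall V in T, (U :&: V) \in T]].

Definition topology n := {T : {set {set 'I_n}} | is_topology T}.

Section Orders.
Variable n : nat.
Variable T : topology n.
Definition tle (i j : 'I_n) : bool := [forall U in val T, (i \in U) ==> (j \in U)].
Definition tsim (i j : 'I_n) : bool := tle i j && tle j i.
Definition tlt (i j : 'I_n) : bool := tle i j && ~~ tle j i.

Definition wval (f : seq nat) (i : 'I_n) : nat := nth 0 f i.

Definition is_linext (f : seq nat) : bool :=
  [&& size f == n, packed f,
      [forall i, forall j, (wval f i == wval f j) == tsim i j] &
      [forall i, forall j, tlt i j ==> (wval f i < wval f j)%N]].

Definition is_Tpartition (f : seq nat) : bool :=
  [&& size f == n, packed f &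
      [forall i, forall j, tle i j ==> (wval f i <= wval f j)%N]].

Definition ell1 (f : seq nat) : nat :=
  #|[set p : 'I_n * 'I_n | [&& tlt p.1 p.2, (p.1 < p.2)%N & wval f p.1 == wval f p.2]]|.
Definition ell2 (f : seq nat) : nat :=
  #|[set p : 'I_n * 'I_n | [&& tlt p.1 p.2, (p.1 > p.2)%N & wval f p.1 == wval f p.2]]|.
Definition ell3 (f : seq nat) : nat :=
  #|[set t : 'I_n * 'I_n * 'I_n |
      let: (i, j, k) := t in
      [&& (i < j)%N, (j < k)%N, tsim i k, ~~ tsim i j, ~~ tsim j k,
          wval f i == wval f j & wval f j == wval f k]]|.

(* packed words of length n have all letters in [1..n], so they are all
   obtained from n-tuples over 'I_(n.+1) *)
Definition tword (t : n.-tuple 'I_n.+1) : seq nat := map val t.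

Definition Lmap (K : fieldType) : WQSym K :=
  \sum_(t : n.-tuple 'I_n.+1 | is_linext (tword t)) << to_pword (tword t) >>.

Definition Gamma (K : fieldType) (q1 q2 q3 : K) : WQSym K :=
  \sum_(t : n.-tuple 'I_n.+1 | is_Tpartition (tword t))
     << q1 ^+ ell1 (tword t) * q2 ^+ ell2 (tword t) * q3 ^+ ell3 (tword t)
        *g to_pword (tword t) >>.
End Orders.

Definition linear_endo (K : fieldType) (phi : WQSym K -> WQSym K) : Prop :=
  forall (a : K) (x y : WQSym K), phi (a *: x + y) = a *: phi x + phi y.

(* Main.v *)
Require Import Defs.
From mathcomp Require Import all_boot all_order all_algebra.
From mathcomp Require Import finmap.
From mathcomp.multinomials Require Import monalg.
Set Implicit Arguments. Unset Strict Implicit. Unset Printing Implicit Defensive.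
Import GRing.Theory.
From mathcomp Require Import ring.
Section TopR.
Variable n : nat.
Implicit Types (R : rel 'I_n) (U : {set 'I_n}).

Definition upset R U := [forall i, forall j, (i \in U) && R i j ==> (j \in U)].

Lemma upsetP R U : reflect (forall i j, i \in U -> R i j -> j \in U) (upset R U).
Proof.
apply: (iffP forallP) => [H i j iU Rij|H i].
  by have /forallP/(_ j) := H i; rewrite iU Rij.
by apply/forallP => j; apply/implyP => /andP [iU Rij]; exact: H iU Rij.
Qed.

Definition TRset R := [set U | upset R U].

Lemma TR_top R : is_topology (TRset R).
Proof.
apply/and4P; split.
- by rewrite inE; apply/upsetP => i j; rewrite inE.
- by rewrite inE; apply/upsetP => i j; rewrite !in_setT.
- apply/forallP => U; apply/implyP; rewrite inE => /upsetP hU.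
  apply/forallP => V; apply/implyP; rewrite inE => /upsetP hV.
  rewrite inE; apply/upsetP => i j; rewrite !inE => /orP [iU|iV] Rij.
    by rewrite (hU i j iU Rij).
  by rewrite (hV i j iV Rij) orbT.
- apply/forallP => U; apply/implyP; rewrite inE => /upsetP hU.
  apply/forallP => V; apply/implyP; rewrite inE => /upsetP hV.
  rewrite inE; apply/upsetP => i j; rewrite !inE => /andP [iU iV] Rij.
  by rewrite (hU i j iU Rij) (hV i j iV Rij).
Qed.

Definition TR R : topology n := exist _ (TRset R) (TR_top R).

Lemma tle_TR R : reflexive R -> transitive R -> forall i j, tle (TR R) i j = R i j.
Proof.
move=> Rr Rt i j; apply/forallP/idP => [H|Rij U].
  have := H [set k | R i k]; have -> : [set k | R i k] \in val (TR R).
    rewrite inE; apply/upsetP => k l; rewrite !inE => Rik Rkl; exact: Rt Rik Rkl.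
  by rewrite !inE Rr.
apply/implyP.
rewrite inE => /upsetP hU; apply/implyP => iU; exact: hU i j iU Rij.
Qed.

End TopR.
Lemma packedP (w : seq nat) :
  reflect ((0 \notin w) /\ forall k x, x \in w -> 0 < k <= x -> k \in w) (packed w).
Proof.
apply: (iffP andP) => [[w0 /allP H]|[w0 H]]; split => //.
  move=> k x xw /andP [k0 kx]; apply: H; rewrite mem_iota k0 add1n ltnS.
  by apply: leq_trans kx _; exact: (leq_bigmax_seq x xw).
apply/allP => k; rewrite mem_iota add1n ltnS => /andP [k0 kM].
case: (boolP (has (fun x => k <= x) w)) => [/hasP [x xw kx]|/hasP N].
  by apply: H xw _; rewrite k0.
exfalso; suff : \max_(x <- w) x <= k.-1.
  by rewrite leqNgt (leq_trans _ kM) // prednK.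
apply/bigmax_leqP_seq => x xw _; rewrite -ltnS prednK //.
by rewrite ltnNge; apply/negP => kx; apply: N; exists x.
Qed.

Section Tup.
Variable n : nat.
Implicit Types (t : n.-tuple 'I_n.+1).

Lemma wval_tword t (i : 'I_n) : wval (tword t) i = tnth t i.
Proof. by rewrite /wval /tword (nth_map ord0) ?size_tuple // (tnth_nth ord0). Qed.

Lemma size_tword t : size (tword t) = n.
Proof. by rewrite size_map size_tuple. Qed.

Lemma mem_tword t x : (x \in tword t) = [exists i, (tnth t i : nat) == x].
Proof.
apply/mapP/existsP => [[y /tnthP [i ->] ->]|[i /eqP <-]]; first by exists i.
by exists (tnth t i) => //; apply/tnthP; exists i.
Qed.

Lemma packed_tP t : reflect ((forall i, 0 < tnth t i) /\
   forall k i, 0 < k <= tnth t i -> exists j, (tnth t j : nat) = k) (packed (tword t)).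
Proof.
apply: (iffP (packedP _)) => [[w0 H]|[w0 H]]; split.
- move=> i; rewrite lt0n; apply/negP => /eqP e; move/negP: w0; apply.
  by rewrite mem_tword; apply/existsP; exists i; rewrite e.
- move=> k i ki; have : k \in tword t.
    by apply: (H k (tnth t i)) => //; rewrite mem_tword; apply/existsP; exists i.
  by rewrite mem_tword => /existsP [j /eqP]; exists j.
- rewrite mem_tword; apply/existsP => [[i /eqP e]]; by have := w0 i; rewrite e.
- move=> k x; rewrite mem_tword => /existsP [i /eqP <-] ki.
  have [j e] := H k i ki; rewrite mem_tword; apply/existsP; exists j; exact/eqP.
Qed.

End Tup.
Lemma card_range m k : k <= m -> #|[set v : 'I_m.+1 | 0 < v <= k]| = k.
Proof.
move=> km.
have -> : [set v : 'I_m.+1 | 0 < v <= k] = [set inord x.+1 | x : 'I_k].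
  apply/setP => v; rewrite !inE; apply/idP/imsetP => [/andP [v0 vk]|[x _ ->]].
    have xk : v.-1 < k by rewrite prednK.
    exists (Ordinal xk) => //; apply: val_inj; rewrite /= inordK ?prednK //.
  rewrite inordK //= ltnS; exact: leq_trans (ltn_ord x) km.
rewrite card_imset ?card_ord // => x y /(congr1 val) /=.
have h (z : 'I_k) : z.+1 < m.+1 by rewrite ltnS (leq_trans (ltn_ord z) km).
by rewrite !inordK // => -[] /val_inj.
Qed.
Section Pack.
Variable n : nat.
Variable P : rel 'I_n.
Hypotheses (Pr : reflexive P) (Pt : transitive P) (Ptot : total P).

Definition rep (j : 'I_n) := [forall j' : 'I_n, (j' < j)%N ==> ~~ (P j' j && P j j')].
Definition cnt (i : 'I_n) := #|[set j | rep j & P j i]|.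

Lemma rep_ex j : exists r, [/\ rep r, P r j & P j r].
Proof.
have Pj : P j j && P j j by rewrite Pr.
case: (@arg_minnP _ j (fun r => P r j && P j r) (fun r : 'I_n => nat_of_ord r) Pj) => r /andP [Prj Pjr] rmin.
exists r; split => //; apply/forallP => j'; apply/implyP => jr.
apply/negP => /andP [Pjr' Prj']; have := rmin j'.
rewrite (Pt Pjr' Prj) (Pt Pjr Prj') /= => /(_ isT).
by rewrite leqNgt jr.
Qed.

Lemma rep_inj r1 r2 : rep r1 -> rep r2 -> P r1 r2 -> P r2 r1 -> r1 = r2.
Proof.
move=> /forallP h1 /forallP h2 P12 P21; apply: val_inj.
case: (ltngtP r1 r2) => // lt.
  by have := h2 r1; rewrite lt P12 P21.
by have := h1 r2; rewrite lt P12 P21.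
Qed.

Lemma cnt_le i j : P i j -> cnt i <= cnt j.
Proof.
move=> Pij; apply: subset_leq_card; apply/subsetP => r; rewrite !inE.
by case/andP => -> Pri; exact: Pt Pri Pij.
Qed.

Lemma cnt_lt i j : ~~ P j i -> cnt i < cnt j.
Proof.
move=> nPji; have [r [rr Prj Pjr]] := rep_ex j.
apply: proper_card; rewrite properE; apply/andP; split.
  apply/subsetP => x; rewrite !inE => /andP [-> Pxi] /=.
  apply: (Pt Pxi); case/orP: (Ptot i j) => // Pji; by rewrite Pji in nPji.
apply/subsetPn; exists r; rewrite !inE rr ?Prj //=.
by apply/negP => Pri; move/negP: nPji; apply; exact: Pt Pjr Pri.
Qed.

Lemma cnt_leE i j : (cnt i <= cnt j) = P i j.
Proof.
case: (boolP (P i j)) => [/cnt_le -> //| nPij].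
by rewrite leqNgt (cnt_lt nPij).
Qed.

Lemma cnt_eqE i j : (cnt i == cnt j) = P i j && P j i.
Proof. by rewrite eqn_leq !cnt_leE. Qed.

Lemma cnt_gt0 i : 0 < cnt i.
Proof.
rewrite /cnt card_gt0; apply/set0Pn; have [r [rr Pri _]] := rep_ex i.
by exists r; rewrite inE rr Pri.
Qed.

Lemma cnt_le_n i : cnt i <= n.
Proof. by apply: leq_trans (max_card _) _; rewrite card_ord. Qed.

Lemma cnt_surj k i : 0 < k <= cnt i -> exists j, cnt j = k.
Proof.
move=> kk; set A := [set j | rep j & P j i].
pose h := fun r : 'I_n => (inord (cnt r) : 'I_n.+1).
have hv r : (h r : nat) = cnt r by rewrite /h inordK // ltnS cnt_le_n.
have hinj : {in A &, injective h}.
  move=> r1 r2; rewrite !inE => /andP [r1r _] /andP [r2r _] /(congr1 (@nat_of_ord _)).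
  rewrite !hv => /eqP; rewrite cnt_eqE => /andP [] ; exact: rep_inj.
have ci := cnt_le_n i.
have sub : h @: A \subset [set v : 'I_n.+1 | 0 < v <= cnt i].
  apply/subsetP => v /imsetP [r]; rewrite /A inE => /andP [_ Pri] ->.
  by rewrite inE hv cnt_gt0 cnt_le.
have eqAB : h @: A =i [set v : 'I_n.+1 | 0 < v <= cnt i].
  by apply/subset_cardP => //; rewrite card_in_imset // card_range.
have kn : k < n.+1 by rewrite ltnS (leq_trans _ ci) //; case/andP: kk.
have : (inord k : 'I_n.+1) \in [set v : 'I_n.+1 | 0 < v <= cnt i].
  by rewrite inE inordK.
rewrite -eqAB => /imsetP [r _ e]; exists r.
by move/(congr1 (@nat_of_ord _)): e; rewrite hv /= inordK.
Qed.

End Pack.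
Section TupPack.
Variable n : nat.
Implicit Types (t : n.-tuple 'I_n.+1) (P : rel 'I_n).

Lemma cnt_ext P1 P2 : P1 =2 P2 -> cnt P1 =1 cnt P2.
Proof.
move=> H i; apply: eq_card => j; rewrite !inE H; congr (_ && _).
by apply: eq_forallb => j'; rewrite !H.
Qed.

Definition Ptup t : rel 'I_n := fun a b => (tnth t a <= tnth t b)%N.

Lemma Ptup_refl t : reflexive (Ptup t). Proof. by move=> a; rewrite /Ptup. Qed.
Lemma Ptup_trans t : transitive (Ptup t). Proof. by move=> b a c; exact: leq_trans. Qed.
Lemma Ptup_total t : total (Ptup t). Proof. by move=> a b; exact: leq_total. Qed.

Lemma packed_cnt t : packed (tword t) -> forall i, (tnth t i : nat) = cnt (Ptup t) i.
Proof.
case/packed_tP => t0 tsurj i.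
set A := [set j | rep (Ptup t) j & Ptup t j i].
pose h := fun r : 'I_n => tnth t r.
have hinj : {in A &, injective h}.
  move=> r1 r2; rewrite !inE => /andP [r1r _] /andP [r2r _] e.
  by apply: (rep_inj r1r r2r); rewrite /Ptup /h in e *; rewrite e.
have eqAB : h @: A = [set v : 'I_n.+1 | 0 < v <= tnth t i].
  apply/setP => v; rewrite inE; apply/imsetP/idP => [[r]|/andP [v0 vi]].
    by rewrite /A inE => /andP [_ Pri] ->; rewrite t0.
  have [j tj] := tsurj v i (introT andP (conj v0 vi)).
  have [r [rr Prj Pjr]] := rep_ex (@Ptup_refl t) (@Ptup_trans t) j.
  have trj : (tnth t r : nat) = tnth t j by apply/eqP; rewrite eqn_leq; apply/andP; split.
  exists r; first by rewrite /A inE rr /= /Ptup /= trj tj.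
  by apply: val_inj => /=; rewrite /h /= trj tj.
rewrite /cnt -/A -(card_in_imset hinj) eqAB card_range //.
by rewrite -ltnS.
Qed.

Definition cntup P : n.-tuple 'I_n.+1 := [tuple inord (cnt P i) | i < n].

Lemma tnth_cntup P i : (tnth (cntup P) i : nat) = cnt P i.
Proof. by rewrite tnth_mktuple inordK // ltnS cnt_le_n. Qed.

Lemma packed_cntup P : reflexive P -> transitive P -> total P ->
  packed (tword (cntup P)).
Proof.
move=> Pr Pt Ptot; apply/packed_tP; split => [i|k i].
  by rewrite tnth_cntup cnt_gt0.
rewrite tnth_cntup => /(cnt_surj Pr Pt Ptot) [j cj].
by exists j; rewrite tnth_cntup.
Qed.

End TupPack.
Section Core.
Variable n : nat.
Variable R : rel 'I_n.
Hypotheses (Rr : reflexive R) (Rt : transitive R).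
Variable key : 'I_n -> nat.
Hypothesis key_inj : injective key.
Variable f : 'I_n -> nat.

Definition PT (Q : rel 'I_n) := [forall i, forall j, Q i j ==> (f i <= f j)].
Definition E2 (Q : rel 'I_n) :=
  [forall i, forall j, [&& Q i j, ~~ Q j i & key j < key i] ==> (f i != f j)].
Definition E3 (Q : rel 'I_n) := [forall i, forall j, forall k,
  ~~ [&& key i < key j, key j < key k, Q i k && Q k i, ~~ (Q i j && Q j i),
        ~~ (Q j k && Q k j), f i == f j & f j == f k]].

Lemma PTP (Q : rel 'I_n) : reflect (forall i j, Q i j -> f i <= f j) (PT Q).
Proof.
apply: (iffP forallP) => [H i j Qij|H i].
  by have /forallP/(_ j) := H i; rewrite Qij.
by apply/forallP => j; apply/implyP; exact: H.
Qed.

Lemma E2P (Q : rel 'I_n) : reflect (forall i j, Q i j -> ~~ Q j i -> key j < key i -> f i != f j) (E2 Q).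
Proof.
apply: (iffP forallP) => [H i j Qij nQji kji|H i].
  by have /forallP/(_ j) := H i; rewrite Qij nQji kji.
by apply/forallP => j; apply/implyP => /and3P [a b c]; exact: H.
Qed.

Lemma E3P (Q : rel 'I_n) : reflect (forall i j k, key i < key j -> key j < key k ->
   Q i k && Q k i -> ~~ (Q i j && Q j i) -> ~~ (Q j k && Q k j) ->
   f i == f j -> f j == f k -> False) (E3 Q).
Proof.
apply: (iffP forallP) => [H i j k a b c d e g h|H i].
  by have /forallP/(_ j)/forallP/(_ k) := H i; rewrite a b c d e g h.
apply/forallP => j; apply/forallP => k; apply/negP => /and5P [a b c d /andP [e /andP [g h]]].
exact: H a b c d e g h.
Qed.

Definition validg (g : n.-tuple 'I_n.+1) :=
  [&& packed (tword g),
      [forall i, forall j, ((tnth g i : nat) == tnth g j) == (R i j && R j i)],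
      [forall i, forall j, (R i j && ~~ R j i) ==> (tnth g i < tnth g j)],
      PT (Ptup g), E2 (Ptup g) & E3 (Ptup g)].

Definition cls i j := R i j && R j i.
Lemma cls_sym i j : cls i j = cls j i. Proof. by rewrite /cls andbC. Qed.
Lemma cls_refl i : cls i i. Proof. by rewrite /cls Rr. Qed.
Lemma cls_trans j i k : cls i j -> cls j k -> cls i k.
Proof.
by case/andP => a b /andP [c d]; rewrite /cls (Rt a c) (Rt d b).
Qed.

Lemma validP g : validg g -> [/\ packed (tword g),
   forall i j, ((tnth g i : nat) == tnth g j) = cls i j,
   forall i j, R i j -> ~~ R j i -> tnth g i < tnth g j,
   PT (Ptup g) & E2 (Ptup g) && E3 (Ptup g)].
Proof.
case/and3P => p /forallP L1 /and4P [/forallP L2 a b c]; split => // [i j|i j|]; last by rewrite b c.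
  by have /forallP/(_ j)/eqP := L1 i.
by move=> Rij nRji; have /forallP/(_ j) := L2 i; rewrite Rij nRji.
Qed.

Definition m i := [arg min_(j < i | cls i j) key j].

Lemma mP i : cls i (m i) /\ forall j, cls i j -> key (m i) <= key j.
Proof. by rewrite /m; case: arg_minnP => [|a ha hmin]; [exact: cls_refl|]. Qed.

Lemma m_eq i j : cls i j -> m i = m j.
Proof.
move=> cij; have [ci hi] := mP i; have [cj hj] := mP j.
apply: key_inj; apply/eqP; rewrite eqn_leq hi ?hj //.
  by apply: cls_trans ci; rewrite cls_sym.
exact: cls_trans cij cj.
Qed.

Lemma m_clsE i j : (m i == m j) = cls i j.
Proof.
apply/eqP/idP => [e|]; last exact: m_eq.
have [ci _] := mP i; have [cj _] := mP j; rewrite e in ci.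
by apply: cls_trans ci _; rewrite cls_sym.
Qed.

Lemma key_mE i j : (key (m i) == key (m j)) = cls i j.
Proof. by rewrite (inj_eq key_inj) m_clsE. Qed.

Definition Kle i j := (f i < f j) || ((f i == f j) && (key (m i) <= key (m j))).

Lemma Kle_f i j : Kle i j -> f i <= f j.
Proof. by case/orP => [/ltnW //| /andP [/eqP -> _]]. Qed.

Lemma Kle_refl : reflexive Kle.
Proof. by move=> i; rewrite /Kle eqxx leqnn orbT. Qed.

Lemma Kle_total : total Kle.
Proof.
move=> i j; rewrite /Kle; case: (ltngtP (f i) (f j)) => //= _; exact: leq_total.
Qed.

Lemma Kle_trans : transitive Kle.
Proof.
move=> j i k Hij Hjk; have fij := Kle_f Hij; have fjk := Kle_f Hjk.
case: (ltnP (f i) (f k)) => fik; first by rewrite /Kle fik.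
have eik : f i = f k by apply/eqP; rewrite eqn_leq (leq_trans fij fjk) fik.
have eij : f i = f j by apply/eqP; rewrite eqn_leq fij eik fjk.
have ejk : f j = f k by rewrite -eij.
move: Hij Hjk; rewrite /Kle eij ejk ltnn eqxx /=; exact: leq_trans.
Qed.


Lemma eqG_f g : PT (Ptup g) -> forall a b, (tnth g a : nat) = tnth g b -> f a = f b.
Proof.
move=> /PTP hP a b e; apply/eqP; rewrite eqn_leq !hP //; by rewrite /Ptup e.
Qed.

Lemma valid_Kle g : validg g -> forall i j, Ptup g i j = Kle i j.
Proof.
move=> /validP [_ L1 L2 hP /andP [/E2P hE2 _]] i j.
have fG := PTP _ hP.
rewrite /Ptup /Kle; case: (ltngtP (f i) (f j)) => [fij|fji|fij] /=.
- rewrite leqNgt; apply/negP => Gji.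
  by move: (fG j i (ltnW Gji)); rewrite leqNgt fij.
- apply/negP => Gij; by move: (fG i j Gij); rewrite leqNgt fji.
- have [ci _] := mP i; have [cj _] := mP j.
  have Gi : (tnth g i : nat) = tnth g (m i) by apply/eqP; rewrite L1.
  have Gj : (tnth g j : nat) = tnth g (m j) by apply/eqP; rewrite L1.
  have fa : f (m i) = f (m j).
    by rewrite -(eqG_f hP Gi) -(eqG_f hP Gj).
  rewrite Gi Gj.
  case: (boolP (cls i j)) => cij; first by rewrite (m_eq cij) !leqnn.
  have kne : key (m i) != key (m j) by rewrite key_mE.
  have Gne : (tnth g (m i) : nat) != tnth g (m j).
    by rewrite -Gi -Gj L1.
  case: (ltngtP (key (m i)) (key (m j))) => [kl|kg|ke]; last by rewrite ke eqxx in kne.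
  + rewrite leqNgt; apply/negP => Gl.
    have := hE2 (m j) (m i); rewrite /Ptup (ltnW Gl) -ltnNge Gl kl fa eqxx.
    by move/(_ isT isT isT).
  + apply/negP => Gl.
    have Gl' : (tnth g (m i) : nat) < tnth g (m j) by rewrite ltn_neqAle Gne Gl.
    have := hE2 (m i) (m j); rewrite /Ptup Gl -ltnNge Gl' kg fa eqxx.
    by move/(_ isT isT isT).
Qed.

Lemma valid_cond g : validg g -> [&& PT R, E2 R & E3 R].
Proof.
move=> /validP [_ L1 L2 hP /andP [/E2P hE2 /E3P hE3]].
have fG := PTP _ hP.
have ltG i j : R i j -> ~~ R j i -> Ptup g i j && ~~ Ptup g j i.
  by move=> a b; rewrite /Ptup -ltnNge (ltnW (L2 _ _ a b)) L2.
have clsG i j : Ptup g i j && Ptup g j i = cls i j.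
  by rewrite /Ptup -eqn_leq L1.
apply/and3P; split.
- apply/PTP => i j Rij; case: (boolP (R j i)) => Rji.
    apply: fG; rewrite /Ptup leq_eqVlt; apply/orP; left; rewrite L1.
    by rewrite /cls Rij Rji.
  by apply: fG; rewrite /Ptup ltnW // L2.
- apply/E2P => i j Rij nRji kji; case/andP: (ltG _ _ Rij nRji) => a b.
  exact: hE2 a b kji.
- apply/E3P => i j k a b c d e h1 h2.
  by apply: (hE3 i j k a b); rewrite ?clsG.
Qed.

Lemma KleE : PT R -> forall i j, Kle i j && Kle j i = cls i j.
Proof.
move=> /PTP hP i j.
have fc : cls i j -> f i = f j.
  by case/andP => a b; apply/eqP; rewrite eqn_leq !hP.
rewrite /Kle; case: (ltngtP (f i) (f j)) => [fij|fji|fij] /=.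
- by apply/esym/negP => /fc e; rewrite e ltnn in fij.
- by apply/esym/negP => /fc e; rewrite e ltnn in fji.
- by rewrite -eqn_leq key_mE.
Qed.

Lemma cond_valid : [&& PT R, E2 R & E3 R] -> validg (cntup Kle).
Proof.
case/and3P => hPT /E2P hE2 /E3P hE3.
have hP := PTP _ hPT.
have fc : forall i j, cls i j -> f i = f j.
  by move=> i j /andP [a b]; apply/eqP; rewrite eqn_leq !hP.
have Gle i j : Ptup (cntup Kle) i j = Kle i j.
  by rewrite /Ptup !tnth_cntup (cnt_leE Kle_refl Kle_trans Kle_total).
have Geq i j : ((tnth (cntup Kle) i : nat) == tnth (cntup Kle) j) = cls i j.
  by rewrite !tnth_cntup (cnt_eqE Kle_refl Kle_trans Kle_total) KleE.
have Gcls i j : Ptup (cntup Kle) i j && Ptup (cntup Kle) j i = cls i j.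
  by rewrite !Gle KleE.
apply/and3P; split.
- exact: packed_cntup Kle_refl Kle_trans Kle_total.
- by apply/forallP => i; apply/forallP => j; rewrite Geq.
apply/and4P; split.
- apply/forallP => i; apply/forallP => j; apply/implyP => /andP [Rij nRji].
  rewrite ltnNge -/(Ptup (cntup Kle) j i) Gle /Kle negb_or.
  have fij : f i <= f j by apply: hP.
  rewrite -leqNgt fij /= negb_and; case: (boolP (f j == f i)) => //= /eqP fji.
  have [ci mi] := mP i; have [cj mj] := mP j.
  have Rab : R (m i) (m j).
    case/andP: ci => _ h1; case/andP: cj => h2 _.
    exact: Rt (Rt h1 Rij) h2.
  have nRba : ~~ R (m j) (m i).
    apply/negP => Rba; move/negP: nRji; apply.
    case/andP: ci => _ h1; case/andP: cj => h2 _.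
    exact: Rt (Rt h2 Rba) h1.
  have fab : f (m i) = f (m j) by rewrite -(fc _ _ ci) -(fc _ _ cj) fji.
  rewrite -ltnNge ltn_neqAle key_mE /cls Rij (negbTE nRji) /=.
  rewrite leqNgt; apply/negP => kba.
  by move: (hE2 _ _ Rab nRba kba); rewrite fab eqxx.
- by apply/PTP => i j; rewrite Gle; exact: Kle_f.
- apply/E2P => i j; rewrite !Gle => Kij nKji kji; apply/negP => /eqP fij.
  move: Kij nKji; rewrite /Kle fij ltnn eqxx /= -ltnNge => _ kmm.
  have [ci mi] := mP i; have [cj mj] := mP j.
  have kbj : key (m j) <= key j by apply: mj; exact: cls_refl.
  apply: (hE3 (m i) (m j) i kmm (leq_ltn_trans kbj kji)) .
  + by rewrite -/(cls (m i) i) cls_sym.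
  + rewrite -/(cls (m i) (m j)); apply/negP => cab.
    have : cls i j by apply: cls_trans (cls_trans ci cab) _; rewrite cls_sym.
    by rewrite -key_mE => /eqP e; rewrite e ltnn in kmm.
  + rewrite -/(cls (m j) i); apply/negP => cji.
    have : cls i j by apply: (cls_trans (j:=m j)); rewrite cls_sym.
    by rewrite -key_mE => /eqP e; rewrite e ltnn in kmm.
  + by rewrite -(fc _ _ ci) -(fc _ _ cj) fij.
  + by rewrite -(fc _ _ cj) fij.
- apply/E3P => i j k a b; rewrite !Gcls => c d e.
  exact: hE3 a b c d e.
Qed.

Lemma valid_unique g : validg g -> g = cntup Kle.
Proof.
move=> vg; apply: eq_from_tnth => i; apply: val_inj => /=.
rewrite tnth_cntup (packed_cnt _ i); last by case/validP: vg.
exact: (cnt_ext (valid_Kle vg) i).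
Qed.

Lemma count_valid : #|[pred g | validg g]| = [&& PT R, E2 R & E3 R].
Proof.
case: (boolP [&& PT R, E2 R & E3 R]) => H.
  apply: (@eq_card1 _ (cntup Kle)) => g; rewrite !inE.
  apply/idP/eqP => [/valid_unique //|->]; exact: cond_valid.
apply: eq_card0 => g; rewrite !inE; apply/negP => /valid_cond.
by rewrite (negbTE H).
Qed.

End Core.
Lemma cards0E (T : finType) (P : pred T) :
  (#|[set x | P x]| == 0) = [forall x, ~~ P x].
Proof.
rewrite cards_eq0; apply/eqP/forallP => [H x|H].
  apply/negP => Px; suff : x \in [set x | P x] by rewrite H inE.
  by rewrite inE.
by apply/setP => x; rewrite !inE (negbTE (H x)).
Qed.

Section Conn.
Variable n : nat.
Implicit Types (T : topology n) (t g : n.-tuple 'I_n.+1).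

Definition tf t := fun i : 'I_n => (tnth t i : nat).
Definition vkey := fun i : 'I_n => (i : nat).
Definition rkey := fun i : 'I_n => n - i.

Lemma vkey_inj : injective vkey. Proof. exact: val_inj. Qed.
Lemma rkey_inj : injective rkey.
Proof.
move=> i j /eqP; rewrite /rkey eqn_leq !leq_sub2lE; try exact: ltnW.
by move=> h; apply: val_inj; apply/eqP; rewrite eqn_leq andbC.
Qed.

Lemma tle_refl T : reflexive (tle T).
Proof. by move=> i; apply/forall_inP => U _; apply/implyP. Qed.

Lemma tle_trans T : transitive (tle T).
Proof.
move=> j i k /forall_inP hij /forall_inP hjk; apply/forall_inP => U UT.
apply/implyP => iU; have /implyP/(_ iU) := hij U UT.
by move=> jU; have /implyP/(_ jU) := hjk U UT.
Qed.

Lemma linext_E T g : is_linext T (tword g) =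
  [&& packed (tword g),
      [forall i, forall j, ((tnth g i : nat) == tnth g j) == (tle T i j && tle T j i)] &
      [forall i, forall j, (tle T i j && ~~ tle T j i) ==> (tnth g i < tnth g j)]].
Proof.
rewrite /is_linext size_tword eqxx /=; congr [&& _, _ & _].
  by apply: eq_forallb => i; apply: eq_forallb => j; rewrite !wval_tword.
by apply: eq_forallb => i; apply: eq_forallb => j; rewrite !wval_tword.
Qed.

Lemma Tpart_E T t : is_Tpartition T (tword t) = packed (tword t) && PT (tf t) (tle T).
Proof.
rewrite /is_Tpartition size_tword eqxx /=; congr (_ && _).
by apply: eq_forallb => i; apply: eq_forallb => j; rewrite !wval_tword.
Qed.

Lemma ell2_E T t : (ell2 T (tword t) == 0) = E2 vkey (tf t) (tle T).
Proof.
rewrite cards0E; apply/forallP/E2P => [H i j Qij nQji kji|H [i j]].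
  by have := H (i, j); rewrite /= /tlt Qij nQji kji !wval_tword.
rewrite /= /tlt !wval_tword; apply/negP => /and3P [/andP [Qij nQji] kji e].
by move: (H i j Qij nQji kji); rewrite e.
Qed.

Lemma ell1_E T t : (ell1 T (tword t) == 0) = E2 rkey (tf t) (tle T).
Proof.
have kE (i j : 'I_n) : (rkey j < rkey i) = (i < j).
  by rewrite /rkey ltn_sub2lE // ltnW.
rewrite cards0E; apply/forallP/E2P => [H i j Qij nQji kji|H [i j]].
  by have := H (i, j); rewrite /= /tlt Qij nQji -kE kji !wval_tword.
rewrite /= /tlt !wval_tword; apply/negP => /and3P [/andP [Qij nQji] kji e].
by move: (H i j Qij nQji); rewrite kE => /(_ kji); rewrite e.
Qed.

Lemma ell3_E T t : (ell3 T (tword t) == 0) = E3 vkey (tf t) (tle T).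
Proof.
rewrite cards0E; apply/forallP/forallP => [H i|H [[i j] k]].
  apply/forallP => j; apply/forallP => k.
  by have := H (i, j, k); rewrite /= !wval_tword.
have /forallP/(_ k) := (forallP (H i)) j.
by rewrite /= !wval_tword.
Qed.

Lemma E3_swap (key1 key2 : 'I_n -> nat) (f : 'I_n -> nat) (Q : rel 'I_n) :
  (forall i j, (key1 i < key1 j) = (key2 j < key2 i)) ->
  E3 key1 f Q -> E3 key2 f Q.
Proof.
move=> hk /E3P H; apply/E3P => i j k a b c d e h1 h2.
apply: (H k j i); rewrite ?hk //.
- by rewrite andbC.
- by rewrite andbC.
- by rewrite andbC.
- by rewrite eq_sym.
- by rewrite eq_sym.
Qed.

Lemma ell3_E' T t : (ell3 T (tword t) == 0) = E3 rkey (tf t) (tle T).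
Proof.
have hk (i j : 'I_n) : (rkey i < rkey j) = (vkey j < vkey i).
  by rewrite /rkey /vkey ltn_sub2lE // ltnW.
by rewrite ell3_E; apply/idP/idP; apply: E3_swap => i j; rewrite hk.
Qed.

End Conn.
Lemma sum_bool_card (I : finType) (A B : pred I) :
  \sum_(i | A i) (B i : nat) = #|[pred i | A i && B i]|.
Proof.
rewrite -sum1_card [RHS]big_mkcond [LHS]big_mkcond /=.
by apply: eq_bigr => i _; rewrite !inE; case: (A i); case: (B i).
Qed.

Section Ident.
Variable n : nat.
Implicit Types (T : topology n) (t g : n.-tuple 'I_n.+1).

Lemma PT_ext (f : 'I_n -> nat) (Q1 Q2 : rel 'I_n) : Q1 =2 Q2 -> PT f Q1 = PT f Q2.
Proof. by move=> H; apply: eq_forallb => i; apply: eq_forallb => j; rewrite H. Qed.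
Lemma E2_ext key (f : 'I_n -> nat) (Q1 Q2 : rel 'I_n) : Q1 =2 Q2 -> E2 key f Q1 = E2 key f Q2.
Proof. by move=> H; apply: eq_forallb => i; apply: eq_forallb => j; rewrite !H. Qed.
Lemma E3_ext key (f : 'I_n -> nat) (Q1 Q2 : rel 'I_n) : Q1 =2 Q2 -> E3 key f Q1 = E3 key f Q2.
Proof.
move=> H; apply: eq_forallb => i; apply: eq_forallb => j; apply: eq_forallb => k.
by rewrite !H.
Qed.

Definition TW g : topology n := TR (Ptup g).

Lemma tle_TW g : tle (TW g) =2 Ptup g.
Proof. exact: tle_TR (@Ptup_refl n g) (@Ptup_trans n g). Qed.

Lemma ident_nat (key : 'I_n -> nat) (key_inj : injective key)
  (ellX : topology n -> seq nat -> nat)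
  (hX : forall T t, (ellX T (tword t) == 0) = E2 key (tf t) (tle T))
  (h3 : forall T t, (ell3 T (tword t) == 0) = E3 key (tf t) (tle T)) T t :
  \sum_(g | is_linext T (tword g))
     ([&& is_Tpartition (TW g) (tword t), ellX (TW g) (tword t) == 0
        & ell3 (TW g) (tword t) == 0] : nat)
  = [&& is_Tpartition T (tword t), ellX T (tword t) == 0 & ell3 T (tword t) == 0].
Proof.
rewrite sum_bool_card.
rewrite (eq_card (B := [pred g | packed (tword t) && validg (tle T) key (tf t) g])); last first.
  move=> g; rewrite !inE linext_E Tpart_E hX h3 (PT_ext _ (tle_TW g))
     (E2_ext _ _ (tle_TW g)) (E3_ext _ _ (tle_TW g)) /validg.
  case: (packed (tword t)) => /=; last by rewrite andbF.
  by rewrite -!andbA.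
rewrite Tpart_E hX h3; case: (packed (tword t)) => /=; last first.
  by rewrite (eq_card0 (A := [pred g | false])).
apply: count_valid => //; [exact: tle_refl | exact: tle_trans].
Qed.

End Ident.
Lemma card_count (T : finType) (s : seq T) (P : pred T) :
  uniq s -> (forall x, x \in s) -> #|[set x | P x]| = count P s.
Proof.
move=> us hs; rewrite -size_filter.
have /card_uniqP <- := filter_uniq P us.
by apply: eq_card => x; rewrite inE mem_filter hs andbT.
Qed.

Definition opairs n := [seq (i, j) | i <- ord_enum n, j <- ord_enum n].
Definition otriples n := [seq (x, k) | x <- opairs n, k <- ord_enum n].

Lemma opairs_uniq n : uniq (opairs n).
Proof. by apply: allpairs_uniq; rewrite ?ord_enum_uniq // => -[a b] [c d]. Qed.
Lemma mem_opairs n x : x \in opairs n.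
Proof. by case: x => i j; apply: allpairs_f; apply: mem_ord_enum. Qed.
Lemma otriples_uniq n : uniq (otriples n).
Proof. by apply: allpairs_uniq; rewrite ?ord_enum_uniq ?opairs_uniq // => -[a b] [c d]. Qed.
Lemma mem_otriples n x : x \in otriples n.
Proof. by case: x => p k; apply: allpairs_f; [apply: mem_opairs | apply: mem_ord_enum]. Qed.

Definition npairs n := [seq (i, j) | i <- iota 0 n, j <- iota 0 n].
Definition ntriples n := [seq (x, k) | x <- npairs n, k <- iota 0 n].

Definition vf2 n (x : 'I_n * 'I_n) : nat * nat := (val x.1, val x.2).
Definition vf3 n (x : 'I_n * 'I_n * 'I_n) : nat * nat * nat := (vf2 x.1, val x.2).

Lemma npairsE n : npairs n = map (@vf2 n) (opairs n).
Proof.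
by rewrite /npairs /opairs map_allpairs -val_ord_enum allpairs_mapl allpairs_mapr.
Qed.

Lemma ntriplesE n : ntriples n = map (@vf3 n) (otriples n).
Proof.
by rewrite /ntriples /otriples map_allpairs npairsE -val_ord_enum allpairs_mapl allpairs_mapr.
Qed.

Definition ccount2 n (q : nat -> nat -> bool) :=
  count (fun x => q x.1 x.2) (npairs n).
Definition ccount3 n (q : nat -> nat -> nat -> bool) :=
  count (fun x => q x.1.1 x.1.2 x.2) (ntriples n).
Definition cforall2 n (q : nat -> nat -> bool) :=
  all (fun i => all (fun j => q i j) (iota 0 n)) (iota 0 n).

Lemma card2 n (p : pred ('I_n * 'I_n)) (q : nat -> nat -> bool) :
  (forall i j, p (i, j) = q i j) -> #|[set x | p x]| = ccount2 n q.
Proof.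
move=> H; rewrite (card_count _ (@opairs_uniq n) (@mem_opairs n)) /ccount2 npairsE count_map.
by apply: eq_count => -[i j]; rewrite /= H.
Qed.

Lemma card3 n (p : pred ('I_n * 'I_n * 'I_n)) (q : nat -> nat -> nat -> bool) :
  (forall i j k, p (i, j, k) = q i j k) -> #|[set x | p x]| = ccount3 n q.
Proof.
move=> H; rewrite (card_count _ (@otriples_uniq n) (@mem_otriples n)) /ccount3 ntriplesE count_map.
by apply: eq_count => -[[i j] k]; rewrite /= H.
Qed.

Lemma forall2 n (p : 'I_n -> 'I_n -> bool) (q : nat -> nat -> bool) :
  (forall i j, p i j = q i j) -> [forall i, forall j, p i j] = cforall2 n q.
Proof.
move=> H; rewrite /cforall2 -val_ord_enum all_map; apply/forallP/allP => [h i _|h i] /=.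
  rewrite all_map; apply/allP => j _; rewrite /= -H; exact: (forallP (h i) j).
have := h i (mem_ord_enum i); rewrite /= all_map => /allP hi.
by apply/forallP => j; rewrite H; exact: (hi j (mem_ord_enum j)).
Qed.

Definition cpacked (w : seq nat) :=
  (0 \notin w) && all (fun k => k \in w) (iota 1 (foldr maxn 0 w)).

Lemma packed_c w : packed w = cpacked w.
Proof.
rewrite /packed /cpacked; congr (_ && all _ (iota 1 _)).
by elim: w => [|a w IH]; rewrite ?big_nil ?big_cons //= IH.
Qed.

Section Comp.
Variables (n : nat) (T : topology n) (Rn : nat -> nat -> bool).
Hypothesis htle : forall i j : 'I_n, tle T i j = Rn i j.

Definition clinext (w : seq nat) := [&& size w == n, cpacked w,
  cforall2 n (fun i j => (nth 0 w i == nth 0 w j) == (Rn i j && Rn j i)) &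
  cforall2 n (fun i j => (Rn i j && ~~ Rn j i) ==> (nth 0 w i < nth 0 w j))].

Lemma linext_c w : is_linext T w = clinext w.
Proof.
rewrite /is_linext /clinext packed_c (@forall2 n _ (fun i j => (nth 0 w i == nth 0 w j) == (Rn i j && Rn j i))).
  rewrite (@forall2 n _ (fun i j => (Rn i j && ~~ Rn j i) ==> (nth 0 w i < nth 0 w j))) //.
  by move=> i j; rewrite /tlt !htle.
by move=> i j; rewrite /tsim !htle.
Qed.

Definition ctpart (w : seq nat) := [&& size w == n, cpacked w &
  cforall2 n (fun i j => Rn i j ==> (nth 0 w i <= nth 0 w j))].

Lemma Tpart_c w : is_Tpartition T w = ctpart w.
Proof.
rewrite /is_Tpartition /ctpart packed_c (@forall2 n _ (fun i j => Rn i j ==> (nth 0 w i <= nth 0 w j))) //.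
by move=> i j; rewrite htle.
Qed.

Definition cell1 (w : seq nat) := ccount2 n (fun i j =>
  [&& Rn i j && ~~ Rn j i, i < j & nth 0 w i == nth 0 w j]).
Definition cell2 (w : seq nat) := ccount2 n (fun i j =>
  [&& Rn i j && ~~ Rn j i, i > j & nth 0 w i == nth 0 w j]).
Definition cell3 (w : seq nat) := ccount3 n (fun i j k =>
  [&& i < j, j < k, Rn i k && Rn k i, ~~ (Rn i j && Rn j i), ~~ (Rn j k && Rn k j),
      nth 0 w i == nth 0 w j & nth 0 w j == nth 0 w k]).

Lemma ell1_c w : ell1 T w = cell1 w.
Proof. by apply: card2 => i j; rewrite /tlt !htle. Qed.
Lemma ell2_c w : ell2 T w = cell2 w.
Proof. by apply: card2 => i j; rewrite /tlt !htle. Qed.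
Lemma ell3_c w : ell3 T w = cell3 w.
Proof. by apply: card3 => i j k; rewrite /tsim !htle. Qed.

End Comp.


Fixpoint wlist (N m : nat) : seq (seq nat) :=
  if m is m'.+1 then [seq x :: w | x <- iota 0 N, w <- wlist N m'] else [:: [::]].

Lemma mem_wlist N m w : (w \in wlist N m) = (size w == m) && all (fun x => x < N) w.
Proof.
elim: m w => [|m IH] w /=; first by case: w.
apply/allpairsP/idP => [[[x w'] [/= xN w'm ->]]|].
  move: w'm; rewrite IH /= eqSS => /andP [-> ->]; rewrite andbT.
  by rewrite mem_iota in xN.
case: w => [//|x w] /=; rewrite eqSS => /andP [sw /andP [xN aw]].
by exists (x, w); split => //=; rewrite ?mem_iota ?IH ?sw //.
Qed.

Lemma uniq_wlist N m : uniq (wlist N m).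
Proof.
elim: m => [|m IH] //=; apply: allpairs_uniq => //; first exact: iota_uniq.
by move=> [a b] [c d] _ _ /= [-> ->].
Qed.

Lemma tword_inj n : injective (@tword n).
Proof. by move=> t1 t2 /(inj_map val_inj) /val_inj. Qed.

Lemma sum_tuples (V : zmodType) n (P : pred (seq nat)) (F : seq nat -> V) :
  (\sum_(g : n.-tuple 'I_n.+1 | P (tword g)) F (tword g) =
  \sum_(w <- wlist n.+1 n | P w) F w)%R.
Proof.
rewrite -(big_map (@tword n) P F); apply: perm_big; apply: uniq_perm.
- by rewrite (map_inj_uniq (@tword_inj n)) index_enum_uniq.
- exact: uniq_wlist.
move=> w; rewrite mem_wlist; apply/mapP/idP => [[t _ ->]|/andP [sw aw]].
  rewrite size_tword eqxx /=; apply/allP => x /mapP [y _ ->]; exact: ltn_ord.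
have sz : size (map (@inord n) w) == n by rewrite size_map.
exists (Tuple sz); first exact: mem_index_enum.
apply/esym; rewrite /tword /= -map_comp map_id_in // => x xw /=.
by rewrite inordK //; exact: (allP aw).
Qed.

Lemma Lmap_TW (K : fieldType) n (g : n.-tuple 'I_n.+1) : packed (tword g) ->
  Lmap (TW g) K = (<< to_pword (tword g) >>)%R.
Proof.
move=> pg; rewrite /Lmap (big_pred1 g) // => h; rewrite /= linext_E.
have hE i j : tle (TW g) i j && tle (TW g) j i = ((tnth g i : nat) == tnth g j).
  by rewrite !tle_TW /Ptup eqn_leq.
have hL i j : tle (TW g) i j && ~~ tle (TW g) j i = ((tnth g i : nat) < tnth g j).
  by rewrite !tle_TW /Ptup ltnNge andbC; case: leqP => // /ltnW ->.
apply/idP/eqP => [/and3P [ph /forallP L1 /forallP L2]|->]; last first.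
  rewrite pg /=; apply/andP; split.
    by apply/forallP => i; apply/forallP => j; rewrite hE.
  by apply/forallP => i; apply/forallP => j; rewrite hL; apply/implyP.
have e1 i j : ((tnth h i : nat) == tnth h j) = ((tnth g i : nat) == tnth g j).
  by have /forallP/(_ j)/eqP := L1 i; rewrite hE.
have e2 i j : (tnth g i : nat) < tnth g j -> (tnth h i : nat) < tnth h j.
  by have /forallP/(_ j)/implyP := L2 i; rewrite hL.
have PE : Ptup h =2 Ptup g.
  move=> i j; rewrite /Ptup; case: (ltngtP (tnth g i) (tnth g j)) => [lt|gt|eq].
  - by rewrite ltnW // e2.
  - by apply/negbTE; rewrite -ltnNge; exact: e2.
  - by rewrite leq_eqVlt e1 eq eqxx.
apply: eq_from_tnth => i; apply: val_inj => /=.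
by rewrite (packed_cnt ph) (packed_cnt pg) (cnt_ext PE).
Qed.

Definition T2ab n (a b : nat -> nat) : topology n :=
  TR (fun i j : 'I_n => (a i <= a j) && (b i <= b j)).

Definition Rab (a b : nat -> nat) := fun i j : nat => (a i <= a j) && (b i <= b j).

Lemma tle_T2ab n a b (i j : 'I_n) : tle (T2ab n a b) i j = Rab a b i j.
Proof.
apply: tle_TR => [k|k l m]; first by rewrite !leqnn.
by case/andP => h1 h2 /andP [h3 h4]; rewrite (leq_trans h1 h3) (leq_trans h2 h4).
Qed.

Local Open Scope ring_scope.

Lemma lin_add (K : fieldType) (phi : WQSym K -> WQSym K) : linear_endo phi ->
  forall x y, phi (x + y) = phi x + phi y.
Proof. by move=> hl x y; rewrite -[x in phi (x + _)]scale1r hl scale1r. Qed.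

Lemma lin_0 (K : fieldType) (phi : WQSym K -> WQSym K) : linear_endo phi -> phi 0 = 0.
Proof.
move=> hl; have h := hl 1 0 0; rewrite scale1r addr0 scale1r in h.
by apply: (@addrI _ (phi 0)); rewrite addr0 -h.
Qed.

Lemma lin_sum (K : fieldType) (phi : WQSym K -> WQSym K) : linear_endo phi ->
  forall (I : Type) (r : seq I) (P : pred I) (F : I -> WQSym K),
  phi (\sum_(i <- r | P i) F i) = \sum_(i <- r | P i) phi (F i).
Proof.
move=> hl I r P F; exact: (big_morph phi (lin_add hl) (lin_0 hl)).
Qed.

Lemma monalgU_sum (K : fieldType) (k : pword) (I : Type) (r : seq I) (P : pred I) (F : I -> K) :
  << (\sum_(i <- r | P i) F i) *g k >> = \sum_(i <- r | P i) << F i *g k >>.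
Proof. exact: (big_morph (mkmalgU k) (@monalgUD _ _ k) (@monalgU0 _ _ k)). Qed.

Lemma nth_tword n (g : n.-tuple 'I_n.+1) (i : 'I_n) : nth 0 (tword g) i = tnth g i.
Proof. exact: wval_tword. Qed.

Definition TWn m (w : seq nat) : topology m :=
  TR (fun i j : 'I_m => (nth 0 w i <= nth 0 w j)%N).

Lemma TWn_TW n (g : n.-tuple 'I_n.+1) : TWn n (tword g) = TW g.
Proof.
apply: val_inj; apply/setP => U; rewrite !inE /upset.
by apply: eq_forallb => i; apply: eq_forallb => j; rewrite !nth_tword.
Qed.

Section Exist.
Variables (K : fieldType) (q1 q2 q3 : K).

Definition Fw (k : pword) : WQSym K := Gamma (TWn (size (val k)) (val k)) q1 q2 q3.

Definition phi (x : WQSym K) : WQSym K := \sum_(k <- msupp x) x@_k *: Fw k.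

Lemma phiEw (d : {fset pword}) x : (msupp x `<=` d)%fset ->
  phi x = \sum_(k <- d) x@_k *: Fw k.
Proof.
move=> le; rewrite /phi [LHS](big_fset_incl _ le) => //= k kd /mcoeff_outdom ->.
by rewrite scale0r.
Qed.

Lemma phi_lin : linear_endo phi.
Proof.
move=> a x y.
pose d := (msupp x `|` msupp y `|` msupp (a *: x + y))%fset.
rewrite (@phiEw d (a *: x + y)); last first.
  by apply/fsubsetP => k kx; rewrite !inE kx !orbT.
rewrite (@phiEw d x); last by apply/fsubsetP => k kx; rewrite !inE kx.
rewrite (@phiEw d y); last by apply/fsubsetP => k kx; rewrite !inE kx !orbT.
rewrite scaler_sumr -big_split /=; apply: eq_bigr => k _.
by rewrite mcoeffD mcoeffZ scalerDl scalerA.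
Qed.

Lemma phiU k : phi << k >> = Fw k.
Proof. by rewrite (phiEw msuppU_le) big_seq_fset1 mcoeffUU scale1r. Qed.

Lemma Gamma_size m w (e : size w = m) :
  Gamma (TWn (size w) w) q1 q2 q3 = Gamma (TWn m w) q1 q2 q3.
Proof. by rewrite e. Qed.

Lemma Fw_tword n (g : n.-tuple 'I_n.+1) : packed (tword g) ->
  Fw (to_pword (tword g)) = Gamma (TW g) q1 q2 q3.
Proof.
move=> pg; rewrite /Fw /to_pword insubdK //.
by rewrite (Gamma_size (size_tword g)) TWn_TW.
Qed.

Definition wt n (T : topology n) (w : seq nat) :=
  q1 ^+ ell1 T w * q2 ^+ ell2 T w * q3 ^+ ell3 T w.

Definition cwt n (T : topology n) (w : seq nat) : K :=
  if is_Tpartition T w then wt T w else 0.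

Lemma Gamma_mk n (T : topology n) : Gamma T q1 q2 q3 =
  \sum_(t : n.-tuple 'I_n.+1) << cwt T (tword t) *g to_pword (tword t) >>.
Proof.
unfold Gamma; rewrite [LHS]big_mkcond; apply: eq_bigr => t _.
rewrite /cwt; case: (is_Tpartition T (tword t)); first by [].
by rewrite monalgU0.
Qed.

Lemma main_exist (key : forall n, 'I_n -> nat) (key_inj : forall n, injective (key n))
  (ellX : forall n, topology n -> seq nat -> nat)
  (hX : forall n (T : topology n) (t : n.-tuple 'I_n.+1),
          (ellX n T (tword t) == 0) = E2 (key n) (tf t) (tle T))
  (h3 : forall n (T : topology n) (t : n.-tuple 'I_n.+1),
          (ell3 T (tword t) == 0) = E3 (key n) (tf t) (tle T))
  (hw : forall n (T : topology n) (w : seq nat),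
     cwt T w =
     ([&& is_Tpartition T w, ellX n T w == 0 & ell3 T w == 0] : nat)%:R) :
  forall n (T : topology n), phi (Lmap T K) = Gamma T q1 q2 q3.
Proof.
move=> n T; rewrite /Lmap (lin_sum phi_lin).
rewrite (eq_bigr (fun g => Gamma (TW g) q1 q2 q3)); last first.
  by move=> g; rewrite linext_E => /andP [pg _]; rewrite phiU Fw_tword.
under eq_bigr do rewrite Gamma_mk.
rewrite exchange_big Gamma_mk; apply: eq_bigr => t _.
rewrite -monalgU_sum; congr << _ *g _ >>.
rewrite hw; under eq_bigr do rewrite hw.
by rewrite -natr_sum (ident_nat (key_inj n) (hX n) (h3 n)).
Qed.

End Exist.

Lemma exist100 (K : fieldType) : exists phi : WQSym K -> WQSym K,
  linear_endo phi /\ forall n (T : topology n), phi (Lmap T K) = Gamma T 1 0 0.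
Proof.
exists (phi 1 0 0); split; first exact: phi_lin.
apply: (@main_exist K 1 0 0 (fun n => @vkey n) (fun n => @vkey_inj n) (fun n => @ell2 n)).
- by move=> n T t; exact: ell2_E.
- by move=> n T t; exact: ell3_E.
move=> n T w; rewrite /cwt /wt expr1n mul1r !expr0n.
case: (is_Tpartition T w); case: (ell2 T w == 0); case: (ell3 T w == 0);
  by rewrite /= ?mulr1 ?mul0r ?mulr0.
Qed.

Lemma exist010 (K : fieldType) : exists phi : WQSym K -> WQSym K,
  linear_endo phi /\ forall n (T : topology n), phi (Lmap T K) = Gamma T 0 1 0.
Proof.
exists (phi 0 1 0); split; first exact: phi_lin.
apply: (@main_exist K 0 1 0 (fun n => @rkey n) (fun n => @rkey_inj n) (fun n => @ell1 n)).
- by move=> n T t; exact: ell1_E.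
- by move=> n T t; exact: ell3_E'.
move=> n T w; rewrite /cwt /wt expr1n mulr1 !expr0n.
case: (is_Tpartition T w); case: (ell1 T w == 0); case: (ell3 T w == 0);
  by rewrite /= ?mulr1 ?mul0r ?mulr0.
Qed.
Section Conv.
Variables (K : fieldType) (q1 q2 q3 : K).

Lemma coef_Gamma n (T : topology n) (c : n.-tuple 'I_n.+1) : packed (tword c) ->
  (Gamma T q1 q2 q3)@_(to_pword (tword c)) = cwt q1 q2 q3 T (tword c).
Proof.
move=> pc; rewrite Gamma_mk raddf_sum (bigD1 c) //= mcoeffU eqxx mulr1n big1 ?addr0 //.
move=> t tc; rewrite mcoeffU /cwt; case: ifP => [/and3P [_ pt _]|_]; last by rewrite mul0rn.
case: eqP => [e|]; last by rewrite mulr0n.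
move/(congr1 val): e; rewrite /to_pword !insubdK // => /tword_inj e.
by rewrite e eqxx in tc.
Qed.

Lemma coef_eq (phi : WQSym K -> WQSym K) : linear_endo phi ->
  (forall n (T : topology n), phi (Lmap T K) = Gamma T q1 q2 q3) ->
  forall n (T : topology n) (c : n.-tuple 'I_n.+1), packed (tword c) ->
  \sum_(w <- wlist n.+1 n | is_linext T w) cwt q1 q2 q3 (TWn n w) (tword c)
    = cwt q1 q2 q3 T (tword c).
Proof.
move=> hl H n T c pc.
have := congr1 (mcoeff (to_pword (tword c))) (H n T); rewrite coef_Gamma // => <-.
rewrite /Lmap (lin_sum hl) raddf_sum -sum_tuples; apply: eq_bigr => g.
rewrite linext_E => /andP [pg _].
by rewrite -(Lmap_TW K pg) H /= coef_Gamma // TWn_TW.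
Qed.

Lemma cwt_val n (T : topology n) (Rn : nat -> nat -> bool)
  (htle : forall i j : 'I_n, tle T i j = Rn i j) w b x y z :
  ctpart n Rn w = b -> cell1 n Rn w = x -> cell2 n Rn w = y -> cell3 n Rn w = z ->
  cwt q1 q2 q3 T w = if b then q1 ^+ x * q2 ^+ y * q3 ^+ z else 0.
Proof.
move=> hb hx hy hz.
by rewrite /cwt /wt (Tpart_c htle) (ell1_c htle) (ell2_c htle) (ell3_c htle) hb hx hy hz.
Qed.

End Conv.

Definition Rw (w : seq nat) := fun i j : nat => (nth 0 w i <= nth 0 w j)%N.

Lemma tle_TWn n w (i j : 'I_n) : tle (TWn n w) i j = Rw w i j.
Proof. by apply: tle_TR => [k|k l m]; [exact: leqnn | exact: leq_trans]. Qed.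
Local Open Scope ring_scope.


Section Eqs.
Variables (K : fieldType) (q1 q2 q3 : K) (phi : WQSym K -> WQSym K).
Hypothesis hl : linear_endo phi.
Hypothesis H : forall n (T : topology n), phi (Lmap T K) = Gamma T q1 q2 q3.

Lemma eq1 : q1 + q2 = 1.
Proof.
pose c : 2.-tuple 'I_3 := [tuple (@Ordinal 3 1 isT); (@Ordinal 3 1 isT)].
have pc : packed (tword c) by rewrite packed_c.
have := coef_eq hl H (T2ab 2 (fun i => i) (fun i => (1 - i)%N)) pc.
have -> : tword c = [:: 1; 1] by [].
under eq_bigl do rewrite (linext_c (@tle_T2ab 2 (fun i => i) (fun i => (1 - i)%N))).
rewrite -big_filter.
rewrite (_ : [seq w <- wlist 3 2 | _] = [:: [:: 1; 2]; [:: 2; 1]]); last by vm_compute.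
rewrite !big_cons big_nil addr0.
rewrite (cwt_val _ _ _ (@tle_TWn 2 [:: 1; 2]) (w := [:: 1; 1]) (b := true) (x := 1%N) (y := 0%N) (z := 0%N) erefl erefl erefl erefl).
rewrite (cwt_val _ _ _ (@tle_TWn 2 [:: 2; 1]) (w := [:: 1; 1]) (b := true) (x := 0%N) (y := 1%N) (z := 0%N) erefl erefl erefl erefl).
rewrite (cwt_val _ _ _ (@tle_T2ab 2 (fun i => i) (fun i => (1 - i)%N)) (w := [:: 1; 1]) (b := true) (x := 0%N) (y := 0%N) (z := 0%N) erefl erefl erefl erefl).
by rewrite !expr0 !expr1 !mulr1 mul1r.
Qed.

Lemma eq2 : q1 ^+ 3 + q1 ^+ 2 * q2 + q1 * q2 ^+ 2 = q1.
Proof.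
pose c : 3.-tuple 'I_4 := [tuple (@Ordinal 4 1 isT); (@Ordinal 4 1 isT); (@Ordinal 4 1 isT)].
have pc : packed (tword c) by rewrite packed_c.
pose a := fun i : nat => i.
pose b := fun i : nat => if i == 2%N then 0%N else i.+1.
have := coef_eq hl H (T2ab 3 a b) pc.
have -> : tword c = [:: 1; 1; 1] by [].
under eq_bigl do rewrite (linext_c (@tle_T2ab 3 a b)).
rewrite -big_filter.
rewrite (_ : [seq w <- wlist 4 3 | _] = [:: [:: 1; 2; 3]; [:: 1; 3; 2]; [:: 2; 3; 1]]); last by vm_compute.
rewrite !big_cons big_nil addr0.
rewrite (cwt_val _ _ _ (@tle_TWn 3 [:: 1; 2; 3]) (w := [:: 1; 1; 1]) (b := true) (x := 3%N) (y := 0%N) (z := 0%N) erefl erefl erefl erefl).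
rewrite (cwt_val _ _ _ (@tle_TWn 3 [:: 1; 3; 2]) (w := [:: 1; 1; 1]) (b := true) (x := 2%N) (y := 1%N) (z := 0%N) erefl erefl erefl erefl).
rewrite (cwt_val _ _ _ (@tle_TWn 3 [:: 2; 3; 1]) (w := [:: 1; 1; 1]) (b := true) (x := 1%N) (y := 2%N) (z := 0%N) erefl erefl erefl erefl).
rewrite (cwt_val _ _ _ (@tle_T2ab 3 a b) (w := [:: 1; 1; 1]) (b := true) (x := 1%N) (y := 0%N) (z := 0%N) erefl erefl erefl erefl).
rewrite !expr0 !expr1 !mulr1 => e; by rewrite -[RHS]e addrA.
Qed.

Lemma eq3 : q1 * q2 * q3 + q1 * q2 * q3 = q3.
Proof.
pose c : 3.-tuple 'I_4 := [tuple (@Ordinal 4 1 isT); (@Ordinal 4 1 isT); (@Ordinal 4 1 isT)].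
have pc : packed (tword c) by rewrite packed_c.
pose a := fun i : nat => if i == 1%N then 1%N else 0%N.
pose b := fun i : nat => if i == 1%N then 0%N else 1%N.
have := coef_eq hl H (T2ab 3 a b) pc.
have -> : tword c = [:: 1; 1; 1] by [].
under eq_bigl do rewrite (linext_c (@tle_T2ab 3 a b)).
rewrite -big_filter.
rewrite (_ : [seq w <- wlist 4 3 | _] = [:: [:: 1; 2; 1]; [:: 2; 1; 2]]); last by vm_compute.
rewrite !big_cons big_nil addr0.
rewrite (cwt_val _ _ _ (@tle_TWn 3 [:: 1; 2; 1]) (w := [:: 1; 1; 1]) (b := true) (x := 1%N) (y := 1%N) (z := 1%N) erefl erefl erefl erefl).
rewrite (cwt_val _ _ _ (@tle_TWn 3 [:: 2; 1; 2]) (w := [:: 1; 1; 1]) (b := true) (x := 1%N) (y := 1%N) (z := 1%N) erefl erefl erefl erefl).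
rewrite (cwt_val _ _ _ (@tle_T2ab 3 a b) (w := [:: 1; 1; 1]) (b := true) (x := 0%N) (y := 0%N) (z := 1%N) erefl erefl erefl erefl).
by rewrite !expr0 !expr1 !mul1r.
Qed.
End Eqs.

Theorem proposition21 (K : fieldType) (q1 q2 q3 : K) :
  (exists phi : WQSym K -> WQSym K,
      linear_endo phi /\
      forall (n : nat) (T : topology n), phi (Lmap T K) = Gamma T q1 q2 q3)
  <-> ((q1, q2, q3) = (1, 0, 0) \/ (q1, q2, q3) = (0, 1, 0)).
Proof.
split; last first.
  by case=> [[-> -> ->]|[-> -> ->]]; [exact: exist100 | exact: exist010].
case=> phi [hl H].
have e1 := eq1 hl H; have e2 := eq2 hl H; have e3 := eq3 hl H.
have hq2 : q2 = 1 - q1 by rewrite -e1 [q1 + q2]addrC addrK.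
have h : q1 ^+ 2 * (q1 - 1) = q1 ^+ 3 + q1 ^+ 2 * q2 + q1 * q2 ^+ 2 - q1.
  by rewrite hq2; ring.
rewrite e2 subrr in h.
move/eqP: h; rewrite mulf_eq0 expf_eq0 /= subr_eq0 => /orP [/eqP q10 | /eqP q11].
  have q30 : q3 = 0 by rewrite -e3 q10 !mul0r addr0.
  by right; rewrite q10 q30 hq2 q10 subr0.
have q20 : q2 = 0 by rewrite hq2 q11 subrr.
have q30 : q3 = 0 by rewrite -e3 q20 mulr0 !mul0r addr0.
by left; rewrite q11 q20 q30.
Qed.
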